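(* Let $V$ be a finite nonempty set and $f:\{0,1\}^V\to\{0,1\}^V$ an and-net. Every subnetwork of $f$ has at most one fixed point if and only if $f$ has no positive-circular subnetwork.
   Context: For nonempty $I\subseteq V$ and $z\in\{0,1\}^{V\setminus I}$, the subnetwork of $f$ induced by $z$ is $h:\{0,1\}^I\to\{0,1\}^I$ with $h(x|_I)=f(x)|_I$ for all $x$ whose restriction to $V\setminus I$ is $z$ ($f$ is a subnetwork of itself). For a network $g$ on $W$ and $x^{j\alpha}$ the point equal to $x$ except its $j$-component is $\alpha$, the global interaction graph $G(g)$ is the signed digraph on $W$ with a positive (resp. negative) arc from $j$ to $i$ iff $g_i(x^{j1})-g_i(x^{j0})=1$ (resp. $=-1$) for at least one $x$. $f$ is an and-net if $G(f)$ has at most one arc from $j$ to $i$ for all $i,j$ and for every $i$ and $x$: $f_i(x)=1$ iff $G(f)$ has no positive arc $j\to i$ with $x_j=0$ and no negative arc $j\to i$ with $x_j=1$. A cycle is a subgraph with at most one arc between any ordered pair whose underlying unsigned digraph is a directed cycle; positive if it has an even number of negative arcs. $g$ is positive-circular if $G(g)$ itself is a positive cycle through all vertices of $W$. *)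

(* Defs.v *)
From mathcomp Require Import all_boot all_order.
Set Implicit Arguments. Unset Strict Implicit. Unset Printing Implicit Defensive.

Definition network (W : finType) := {ffun W -> bool} -> {ffun W -> bool}.

Section Defs.
Variable W : finType.

Definition upd (x : {ffun W -> bool}) (j : W) (a : bool) : {ffun W -> bool} :=
  [ffun k => if k == j then a else x k].

Definition pos_arc (g : network W) (j i : W) : bool :=
  [exists x, g (upd x j true) i && ~~ g (upd x j false) i].

Definition neg_arc (g : network W) (j i : W) : bool :=
  [exists x, ~~ g (upd x j true) i && g (upd x j false) i].

Definition arc (g : network W) (j i : W) : bool := pos_arc g j i || neg_arc g j i.

Definition and_net (g : network W) : Prop :=
  (forall j i, ~~ (pos_arc g j i && neg_arc g j i)) /\
  (forall i x, g x i =
     [forall j, ~~ (pos_arc g j i && ~~ x j) && ~~ (neg_arc g j i && x j)]).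

(* G(g) is itself a positive cycle through all vertices of W:
   at most one arc per ordered pair, the underlying unsigned digraph is a
   directed cycle j -> s j visiting every vertex, and the number of negative
   arcs is even. *)
Definition positive_circular (g : network W) : Prop :=
  (forall j i, ~~ (pos_arc g j i && neg_arc g j i)) /\
  exists s : W -> W,
    (forall j i, arc g j i = (i == s j)) /\
    (forall i j, fconnect s i j) /\
    ~~ odd #|[set j | neg_arc g j (s j)]|.

Definition fixed_point (g : network W) (x : {ffun W -> bool}) : Prop := g x = x.

Definition at_most_one_fixed_point (g : network W) : Prop :=
  forall x y, fixed_point g x -> fixed_point g y -> x = y.

End Defs.

Section Sub.
Variable V : finType.

Definition glue (I : {set V}) (z : {ffun V -> bool})
    (y : {ffun {i : V | i \in I} -> bool}) : {ffun V -> bool} :=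
  [ffun v => match (insub v : option {i : V | i \in I}) with
             | Some i => y i
             | None => z v end].

(* the subnetwork of f induced by (the restriction to V \ I of) z *)
Definition subnet (f : network V) (I : {set V}) (z : {ffun V -> bool})
  : network {i : V | i \in I} :=
  fun y => [ffun i => f (glue z y) (val i)].

End Sub.
Arguments glue {V} I z y.
Arguments subnet {V} f I z _.

(* Main.v *)
Require Import Defs.
From mathcomp Require Import all_boot all_order.
From Stdlib Require Import Classical.
Set Implicit Arguments. Unset Strict Implicit. Unset Printing Implicit Defensive.

Section Graph.
Variable T0 : finType.

Definition predcl (e : rel T0) (T : {set T0}) :=
  forall u, u \in T -> exists2 p, p \in T & e p u.
Definition mono (U : {set T0}) (e : rel T0) (c : T0 -> bool) (T : {set T0}) :=
  forall k u1 u2, k \in U -> k \notin T -> u1 \in T -> u2 \in T ->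
    e k u1 -> e k u2 -> c u1 = c u2.
Definition noR (U : {set T0}) (e : rel T0) (c : T0 -> bool) := forall T : {set T0}, T \subset U -> T != set0 -> T != U ->
  predcl e T -> ~ mono U e c T.

Lemma recurrent (g : T0 -> T0) (U : {set T0}) x :
  (forall y, y \in U -> g y \in U) -> x \in U ->
  exists2 z, z \in U & fconnect g (g z) z.
Proof.
move=> gU xU.
have iU : forall n y, y \in U -> iter n g y \in U.
  by elim=> [|n IH] y yU //=; apply: gU; apply: IH.
have := looping_order g x; rewrite /looping; case/trajectP => i lt_i Ei.
exists (iter i g x); first exact: iU.
have E : iter (order g x - i) g (iter i g x) = iter i g x.
  rewrite -iterD subnK; [exact: Ei | exact: ltnW].
have [k Ek] : exists k, order g x - i = k.+1.
  by exists (order g x - i).-1; rewrite prednK // subn_gt0.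
rewrite Ek iterSr in E; rewrite -{2}E; exact: fconnect_iter.
Qed.


Lemma GL2 (U : {set T0}) (e : rel T0) (c : T0 -> bool) :
  (forall u, u \in U -> exists2 p, p \in U & e p u) ->
  (forall u p q, u \in U -> p \in U -> q \in U -> e p u -> e q u -> p = q) ->
  noR U e c ->
  exists pi : T0 -> T0, [/\ (forall u, u \in U -> pi u \in U),
     (forall u p, u \in U -> p \in U -> e p u = (p == pi u)),
     {in U &, injective pi} &
     (forall a b, a \in U -> b \in U -> fconnect pi a b)].
Proof.
move=> H1 Huniq HR.
pose pi u := odflt u [pick p in U | e p u].
have piP : forall u, u \in U -> pi u \in U /\ e (pi u) u.
  move=> u uU; rewrite /pi; case: pickP => [p /andP[pU epu] | none] //=.
  by case: (H1 u uU) => p pU epu; move: (none p); rewrite pU epu.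
have piU : forall u, u \in U -> pi u \in U by move=> u /piP[].
have epi : forall u p, u \in U -> p \in U -> e p u = (p == pi u).
  move=> u p uU pU; case: (piP u uU) => pu eu.
  apply/idP/eqP => [epu|->//]; exact: (Huniq u).
have iU : forall n y, y \in U -> iter n pi y \in U.
  by elim=> [|n IH] y yU //=; apply: piU; apply: IH.
have conn : forall a b, a \in U -> b \in U -> fconnect pi a b.
  move=> a b aU bU.
  pose O := [set x in U | fconnect pi a x].
  have OU : O \subset U by apply/subsetP => x; rewrite inE => /andP[].
  have O0 : O != set0 by apply/set0Pn; exists a; rewrite inE aU connect0.
  have Opc : predcl e O.
    move=> u; rewrite inE => /andP[uU au]; exists (pi u).
      rewrite inE piU //=; apply: connect_trans au _; exact: fconnect1.
    by case: (piP u uU).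
  have Om : mono U e c O.
    move=> k u1 u2 kU kO u1O u2O e1 e2; exfalso; move/negP: kO; apply.
    move: u1O; rewrite !inE => /andP[u1U au1].
    have kE : k = pi u1 by apply/eqP; rewrite -epi.
    rewrite kU /= kE; apply: connect_trans au1 _; exact: fconnect1.
  have : O = U.
    by apply/eqP; apply/negPn/negP => H; exact: (HR O OU O0 H Opc Om).
  by move/setP/(_ b); rewrite inE bU /= => ->.
exists pi; split => //.
apply/imset_injP; rewrite eqn_leq; apply/andP; split.
  by apply: subset_leq_card; apply/subsetP => y /imsetP[x xU ->]; exact: piU.
apply: subset_leq_card; apply/subsetP => x xU.
have := conn (pi x) x (piU x xU) xU => /iter_findex.
set n := findex _ _ _ => E.
apply/imsetP; exists (iter n pi x); first exact: iU.
by rewrite -iterS iterSr E.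
Qed.


Lemma cT_of (g : T0 -> T0) x : fconnect g (g x) x -> exists k, x = g (iter k g x).
Proof. by move/iter_findex; set k := findex _ _ _ => E; exists k; rewrite -iterS iterSr E. Qed.

Lemma GL (U : {set T0}) (e : rel T0) (c : T0 -> bool) :
  (forall u, u \in U -> exists2 p, p \in U & e p u) -> noR U e c ->
  forall u p q, u \in U -> p \in U -> q \in U -> e p u -> e q u -> p = q.
Proof.
move: {2}#|U| (leqnn #|U|) => n; elim: n U e => [|n IH] U e.
  by rewrite leqn0 => /eqP/cards0_eq -> _ _ u p q; rewrite inE.
move=> cardU H1 HR.
case: (classic (exists v p, [/\ v \in U, p \in U, p != v, e p v &
   forall q, q \in U -> e q v -> q = p])) => [[v [p [vU pU pv epv vsole]]] | nocon].
- pose U' := U :\ v.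
  pose e' := fun a b => e a b || ((a == p) && e v b).
  have cardU' : #|U'| <= n.
    by move: cardU; rewrite (cardsD1 v U) vU add1n ltnS.
  have pU' : p \in U' by rewrite !inE pv.
  have H1' : forall u, u \in U' -> exists2 p, p \in U' & e' p u.
    move=> u; rewrite !inE => /andP[uv uU]; case: (H1 u uU) => p0 p0U ep0.
    case: (eqVneq p0 v) => [E|p0v].
      by exists p; rewrite // /e' eqxx -E ep0 orbT.
    by exists p0; rewrite ?inE ?p0v // /e' ep0.
  have HR' : noR U' e' c.
    move=> T TU' Tn0 TnU' Tpc Tmono.
    have vT : v \notin T by apply/negP => /(subsetP TU'); rewrite !inE eqxx.
    pose T2 := if p \in T then v |: T else T.
    have TU : T \subset U by apply: subset_trans TU' _; exact: subsetDl.
    have T2U : T2 \subset U by rewrite /T2; case: ifP => _ //; rewrite subUset sub1set vU.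
    have T20 : T2 != set0.
      apply: contra Tn0; rewrite /T2; case: ifP => _ // /eqP E; apply/eqP.
      by apply/setP => x; move/setP/(_ x): E; rewrite !inE; case: (x == v).
    have T2nU : T2 != U.
      apply/eqP => E; move/eqP: TnU'; apply; apply/setP => x; rewrite !inE.
      case: (eqVneq x v) => [->|xv] /=; first by rewrite (negbTE vT).
      rewrite -E /T2; case: ifP => _ //; by rewrite in_setU1 (negbTE xv).
    have T2pc : predcl e T2.
      move=> u; rewrite /T2; case: ifP => pT.
        rewrite !inE => /orP[/eqP->|uT]; first by exists p; rewrite // !inE pT orbT.
        case: (Tpc u uT) => a aT /orP[eau|/andP[_ evu]].
          by exists a; rewrite // !inE aT orbT.
        by exists v; rewrite // !inE eqxx.
      move=> uT; case: (Tpc u uT) => a aT /orP[eau|/andP[/eqP E _]]; first by exists a.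
      by move: aT; rewrite E pT.
    apply: (HR T2 T2U T20 T2nU T2pc) => k u1 u2 kU kT2 u1T2 u2T2 e1 e2.
    move: kT2 u1T2 u2T2; rewrite /T2; case: ifP => pT.
      rewrite !inE negb_or => /andP[kv kT] /orP[/eqP E1|u1T] /orP[/eqP E2|u2T].
      + by rewrite E1 E2.
      + by exfalso; move: e1; rewrite E1 => /(vsole k kU) E; move: kT; rewrite E pT.
      + by exfalso; move: e2; rewrite E2 => /(vsole k kU) E; move: kT; rewrite E pT.
      apply: (Tmono k) => //; rewrite ?inE ?kv ?kU // /e' ?e1 ?e2 //.
    move=> kT u1T u2T; case: (eqVneq k v) => [kv|kv].
      apply: (Tmono p) => //; first by rewrite pT.
        by rewrite /e' eqxx -kv e1 orbT.
      by rewrite /e' eqxx -kv e2 orbT.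
    by apply: (Tmono k) => //; rewrite ?inE ?kv ?kU // /e' ?e1 ?e2.
  have IH' := IH U' e' cardU' H1' HR'.
  have [pi [piU epi pinj _]] := GL2 H1' IH' HR'.
  have outd : forall x y, x \in U' -> y \in U' -> e' p x -> e' p y -> x = y.
    move=> x y xU yU ex ey; apply: pinj => //.
    by move: ex ey; rewrite !epi // => /eqP <- /eqP <-.
  have key : forall u, u \in U -> u != v -> e p u -> e v u -> False.
    move=> u uU uv epu evu.
    have uU' : u \in U' by rewrite !inE uv.
    apply: (HR (U :\ v)).
    + exact: subsetDl.
    + by apply/set0Pn; exists p.
    + by apply/eqP => /setP/(_ v); rewrite !inE eqxx vU.
    + move=> w wU'; have := wU'; rewrite !inE => /andP[wv wU].
      case: (H1 w wU) => p0 p0U ep0; case: (eqVneq p0 v) => [E|p0v].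
        have ew : e' p w by rewrite /e' eqxx -E ep0 orbT.
        have eu : e' p u by rewrite /e' epu.
        by have -> := outd w u wU' uU' ew eu; exists p.
      by exists p0; rewrite // !inE p0v.
    + move=> k u1 u2 kU kT u1T u2T e1 e2.
      have kv : k = v by apply/eqP; move: kT; rewrite !inE kU andbT negbK.
      subst k; congr c; apply: outd => //; by rewrite /e' eqxx ?e1 ?e2 orbT.
  move=> u p1 p2 uU p1U p2U e1 e2.
  case: (eqVneq u v) => [uv|uv].
    by rewrite (vsole p1) -?uv // (vsole p2) -?uv.
  have uU' : u \in U' by rewrite !inE uv.
  pose m x := if x == v then p else x.
  have mU : forall x, x \in U -> m x \in U' by move=> x xU; rewrite /m; case: eqVneq => // xv; rewrite !inE xv.
  have me : forall x, e x u -> e' (m x) u.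
    by move=> x ex; rewrite /m; case: eqVneq => [E|_]; rewrite /e' ?ex // eqxx -E ex orbT.
  have Em := IH' u (m p1) (m p2) uU' (mU _ p1U) (mU _ p2U) (me _ e1) (me _ e2).
  move: Em; rewrite /m; case: eqVneq => [E1|n1]; case: eqVneq => [E2|n2] //.
  + by rewrite E1 E2.
  + by move=> E; exfalso; apply: (key u) => //; rewrite ?E ?E1 in e1 e2 *.
  + by move=> E; exfalso; apply: (key u) => //; rewrite -?E ?E2 in e1 e2 *.
- move=> u p1 p2 uU p1U p2U e1 e2.
  case: (eqVneq p1 p2) => // p12; exfalso.
  case: (classic (exists v, v \in U /\ forall q, q \in U -> e q v -> q = v)) => [[v [vU vs]]|nos].
    apply: (HR [set v]).
    + by rewrite sub1set.
    + by apply/set0Pn; exists v; rewrite inE.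
    + apply/eqP => /setP E; move: (E p1) (E p2); rewrite !inE p1U p2U.
      by move=> /eqP E1 /eqP E2; rewrite E1 E2 eqxx in p12.
    + move=> w; rewrite inE => /eqP->; case: (H1 v vU) => q qU eq.
      by exists q; rewrite // inE (vs q qU eq).
    + by move=> k a b _ _; rewrite !inE => /eqP-> /eqP->.
  have two : forall v, v \in U -> exists q1 q2, [/\ q1 \in U, q2 \in U, q1 != q2, e q1 v & e q2 v].
    move=> v vU.
    have [q [qU eqv qv]] : exists q, [/\ q \in U, e q v & q != v].
      apply: NNPP => H; apply: nos; exists v; split => // q qU eqv.
      by apply/eqP; apply: negbNE; apply/negP => qv; apply: H; exists q.
    apply: NNPP => H; apply: nocon; exists v, q; split => // q' q'U eq'.
    by apply/eqP; apply: negbNE; apply/negP => nq; apply: H; exists q', q; split.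
  case: (classic (exists v, v \in U /\ forall a b, a \in U -> b \in U -> a != v -> b != v ->
      e v a -> e v b -> c a = c b)) => [[v [vU vm]]|nom].
    apply: (HR (U :\ v)).
    + exact: subsetDl.
    + apply/set0Pn; case: (eqVneq p1 v) => [E|n1]; first by exists p2; rewrite !inE p2U -E eq_sym p12.
      by exists p1; rewrite !inE p1U n1.
    + by apply/eqP => /setP/(_ v); rewrite !inE eqxx vU.
    + move=> w; rewrite !inE => /andP[wv wU].
      have [q1 [q2 [q1U q2U q12 eq1 eq2]]] := two w wU.
      case: (eqVneq q1 v) => [E|n1]; last by exists q1; rewrite // !inE n1.
      by exists q2; rewrite // !inE q2U -E eq_sym q12.
    + move=> k a b kU; rewrite !inE kU andbT negbK => /eqP -> /andP[av aU] /andP[bv bU].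
      exact: vm.
  have bich : forall v, v \in U -> exists a b, [/\ a \in U, b \in U, e v a, e v b & c a != c b].
    move=> v vU; apply: NNPP => H; apply: nom; exists v; split => // a b aU bU _ _ ea eb.
    by apply/eqP; apply: negbNE; apply/negP => nab; apply: H; exists a, b; split.
  pose g v := odflt v [pick x in U | e v x && c x].
  have gP : forall v, v \in U -> [/\ g v \in U, e v (g v) & c (g v)].
    move=> v vU; rewrite /g; case: pickP => [x /and3P[xU exv cx] | none] //=.
    have [a [b [aU bU ea eb cab]]] := bich v vU.
    case: (boolP (c a)) => ca; first by move: (none a); rewrite aU ea ca.
    by move: cab (none b); rewrite (negbTE ca) bU eb; case: (c b).
  have [z zU zrec] := recurrent (fun y yU => (let: And3 h _ _ := gP y yU in h)) uU.
  have iU : forall n y, y \in U -> iter n g y \in U.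
    by elim=> [|m IHm] y yU //=; case: (gP _ (IHm y yU)).
  pose T := [set x in U | fconnect g (g x) x].
  have Tc : forall x, x \in T -> c x.
    move=> x; rewrite inE => /andP[xU /cT_of [k Ek]]; rewrite Ek.
    by case: (gP _ (iU k x xU)).
  apply: (HR T).
  + by apply/subsetP => x; rewrite inE => /andP[].
  + by apply/set0Pn; exists z; rewrite inE zU.
  + apply/eqP => ET.
    have [a [b [aU bU _ _ cab]]] := bich u uU.
    by move: cab; rewrite (Tc a) ?(Tc b) ?ET.
  + move=> x; rewrite inE => /andP[xU xr]; have [k Ek] := cT_of xr.
    exists (iter k g x).
      by rewrite inE iU //= -Ek fconnect_iter.
    by rewrite {2}Ek; case: (gP _ (iU k x xU)).
  + by move=> k a b _ _ aT bT _ _; rewrite (Tc a aT) (Tc b bT).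
Qed.

End Graph.

Lemma parity (W : finType) (s : W -> W) (c : W -> bool) :
  injective s -> ~~ odd #|[set j | c j != c (s j)]|.
Proof.
move=> sinj.
rewrite -sum1_card big_mkcond /=.
rewrite (big_morph odd oddD (erefl (odd 0))).
have -> : \big[addb/false]_(j : W) odd (if j \in [set j | c j != c (s j)] then 1 else 0)
        = \big[addb/false]_(j : W) (c j (+) c (s j)).
  by apply: eq_bigr => j _; rewrite inE; case: (c j); case: (c (s j)).
rewrite big_split /= -(reindex_inj sinj (P := predT) (F := c)) /=.
by rewrite addbb.
Qed.

Lemma surj_inj (W : finType) (s : W -> W) : (forall i, exists j, s j = i) -> injective s.
Proof.
move=> su x y E.
have : {in [set: W] &, injective s}.
  apply/imset_injP; rewrite (_ : [set s x | x in [set: W]] = [set: W]) //.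
  apply/setP => i; rewrite !inE; case: (su i) => j <-; apply/imsetP; by exists j.
by move/(_ x y); apply; rewrite ?inE.
Qed.

Lemma upd_same (W : finType) (x : {ffun W -> bool}) k : upd x k (x k) = x.
Proof. by apply/ffunP => v; rewrite ffunE; case: eqVneq => // ->. Qed.

Lemma noarc_indep (W : finType) (g : network W) k i :
  ~~ Defs.arc g k i -> forall y b, g (upd y k b) i = g y i.
Proof.
rewrite /Defs.arc /pos_arc /neg_arc negb_or => /andP[/existsPn np /existsPn nn] y b.
have E : g (upd y k true) i = g (upd y k false) i.
  move: (np y) (nn y); case: (g (upd y k true) i); case: (g (upd y k false) i) => //.
rewrite -{2}(upd_same y k); case: b; case: (y k) => //.
Qed.

Lemma indep_seq (W : finType) (g : network W) i j :
  (forall k, k != j -> ~~ Defs.arc g k i) ->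
  forall (r : seq W) (x x' : {ffun W -> bool}), (forall k, k \notin r -> x k = x' k) ->
  j \notin r -> g x i = g x' i.
Proof.
move=> H; elim=> [|k r IH] x x' Hr jr.
  by have -> : x = x' by apply/ffunP => v; apply: Hr.
move: jr; rewrite inE negb_or => /andP[jk jr].
rewrite -(noarc_indep (H k _) x (x' k)); last by rewrite eq_sym.
apply: IH => // v vr; rewrite ffunE; case: eqVneq => [->//|vk].
by apply: Hr; rewrite inE negb_or vk.
Qed.

Lemma pc_two (W : finType) (g : network W) (w0 : W) :
  positive_circular g ->
  exists x y, [/\ fixed_point g x, fixed_point g y & x <> y].
Proof.
move=> [excl [s [sarc [sconn spar]]]].
have sinj : injective s.
  apply: surj_inj => i; have [k Ek] := cT_of (sconn (s i) i).
  by exists (iter k s i).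
pose pi := finv s.
have spi : forall i, s (pi i) = i by move=> i; rewrite /pi f_finv.
have pis : forall i, pi (s i) = i by move=> i; rewrite /pi finv_f.
have noarc : forall i k, k != pi i -> ~~ Defs.arc g k i.
  move=> i k kp; rewrite sarc; apply/negP => /eqP E; move: kp; by rewrite E pis eqxx.
have indep : forall i (x x' : {ffun W -> bool}), x (pi i) = x' (pi i) -> g x i = g x' i.
  move=> i x x' E.
  apply: (@indep_seq W g i (pi i) (noarc i) [seq k <- enum W | k != pi i]).
  - move=> k; rewrite mem_filter mem_enum andbT negbK => /eqP->; exact: E.
  - by rewrite mem_filter eqxx.
pose n j := neg_arc g j (s j).
have gval : forall x i, g x i = x (pi i) (+) n (pi i).
  move=> x i; have harc : Defs.arc g (pi i) i by rewrite sarc spi eqxx.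
  rewrite /n spi; have ex := excl (pi i) i.
  move: harc; rewrite /Defs.arc; case/orP => [pa|na].
    have := pa; case/existsP => y /andP[y1 y0].
    have nn : ~~ neg_arc g (pi i) i by apply: contra ex => nn; apply/andP.
    rewrite (negbTE nn) addbF.
    rewrite (indep i x (upd y (pi i) (x (pi i)))); last by rewrite ffunE eqxx.
    by case: (x (pi i)); rewrite ?y1 ?(negbTE y0).
  have := na; case/existsP => y /andP[y1 y0].
  have nn : ~~ pos_arc g (pi i) i by apply: contra ex => nn; apply/andP.
  have na' : neg_arc g (pi i) i := na.
  rewrite na' addbT.
  rewrite (indep i x (upd y (pi i) (x (pi i)))); last by rewrite ffunE eqxx.
  by case: (x (pi i)); rewrite ?(negbTE y1) ?y0.
have ordE : order s w0 = #|W|.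
  by rewrite /order; apply: eq_card => v; rewrite !inE sconn.
pose N := order s w0.
pose h (m : 'I_N) := iter m s w0.
have hinj : injective h.
  move=> a b E; apply: val_inj; rewrite /= -(findex_iter (ltn_ord a)) -(findex_iter (ltn_ord b)).
  by rewrite -/(h a) E.
have hbij : bijective h by apply: inj_card_bij => //; rewrite card_ord /N ordE.
have totpar : \big[addb/false]_(m < N) n (iter m s w0) = false.
  have -> : \big[addb/false]_(m < N) n (iter m s w0) = \big[addb/false]_(v : W) n v.
    by rewrite (reindex h (onW_bij _ hbij)).
  move: spar; rewrite -sum1_card big_mkcond /=.
  rewrite (big_morph odd oddD (erefl (odd 0))).
  have -> : \big[addb/false]_(j : W) odd (if j \in [set j | neg_arc g j (s j)] then 1 else 0)
        = \big[addb/false]_(j : W) n j.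
    by apply: eq_bigr => j _; rewrite inE /n; case: (neg_arc g j (s j)).
  by case: (\big[addb/false]_(j : W) n j).
pose x0 := [ffun v => \big[addb/false]_(m < findex s w0 v) n (iter m s w0)].
have rec : forall (x : {ffun W -> bool}), (forall j, x (s j) = x j (+) n j) -> fixed_point g x.
  move=> x Hx; apply/ffunP => i; rewrite gval -Hx spi //.
have x0rec : forall j, x0 (s j) = x0 j (+) n j.
  move=> j; rewrite !ffunE.
  have jc := sconn w0 j; have Ej := iter_findex jc.
  have lt := findex_max jc; rewrite -/N in lt.
  set k := findex s w0 j in Ej lt *.
  case: (ltngtP k.+1 N) => [lt1|gt1|eq1].
  - have -> : findex s w0 (s j) = k.+1.
      by rewrite -Ej -iterS findex_iter.
    by rewrite big_ord_recr /= Ej.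
  - by move: gt1; rewrite ltnS leqNgt lt.
  - have -> : s j = w0.
      by rewrite -Ej -iterS eq1 /N iter_order.
    have -> : findex s w0 w0 = 0 by apply: (@findex_iter _ s w0 0); exact: order_gt0.
    rewrite big_ord0.
    by move: totpar; rewrite -eq1 big_ord_recr /= Ej => ->.
exists x0, [ffun v => ~~ x0 v]; split.
- exact: rec.
- apply: rec => j; have := x0rec j; rewrite !ffunE => ->.
  by case: (n j); case: (\big[addb/false]_(m < findex s w0 j) n (iter m s w0)).
- by move/ffunP/(_ w0); rewrite ffunE; case: (x0 w0).
Qed.

Section Glue.
Variable V : finType.

Lemma glue_val (I : {set V}) z (y : {ffun {i : V | i \in I} -> bool}) (i : {i : V | i \in I}) :
  glue I z y (val i) = y i.
Proof. by rewrite /glue ffunE valK. Qed.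

Lemma glue_out (I : {set V}) z (y : {ffun {i : V | i \in I} -> bool}) v :
  v \notin I -> glue I z y v = z v.
Proof. by move=> vI; rewrite /glue ffunE insubF //; exact: negbTE. Qed.

Lemma glue_upd (I : {set V}) z (y : {ffun {i : V | i \in I} -> bool}) j b :
  glue I z (upd y j b) = upd (glue I z y) (val j) b.
Proof.
apply/ffunP => v; rewrite /glue !ffunE; case: insubP => [i iI <-|vI] /=.
  by rewrite !ffunE (inj_eq val_inj).
case: eqVneq => // vj; move: vI; by rewrite vj (valP j).
Qed.

End Glue.

Section Net.
Variable V : finType.
Variable f : network V.
Hypothesis Hf : and_net f.

Definition sat (j i : V) (x : {ffun V -> bool}) : bool :=
  ~~ (pos_arc f j i && ~~ x j) && ~~ (neg_arc f j i && x j).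

Lemma fE (x : {ffun V -> bool}) i : f x i = [forall j, sat j i x].
Proof. by case: Hf => _ ->. Qed.

Lemma excl j i : ~~ (pos_arc f j i && neg_arc f j i).
Proof. by case: Hf. Qed.

Lemma sat_noarc j i (x : {ffun V -> bool}) : ~~ Defs.arc f j i -> sat j i x.
Proof. by rewrite /Defs.arc negb_or => /andP[/negbTE p /negbTE n]; rewrite /sat p n. Qed.

Lemma sat_arc j i (x : {ffun V -> bool}) : Defs.arc f j i -> sat j i x = (x j != neg_arc f j i).
Proof.
have := excl j i; rewrite /sat /Defs.arc.
by case: (pos_arc f j i); case: (neg_arc f j i); case: (x j).
Qed.

Lemma sat_ext j i (x y : {ffun V -> bool}) : x j = y j -> sat j i x = sat j i y.
Proof. by rewrite /sat => ->. Qed.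
Arguments sat_ext : clear implicits.

Lemma fT (x : {ffun V -> bool}) i : f x i -> forall j, sat j i x.
Proof. by rewrite fE => /forallP. Qed.

Lemma sub_pos (I : {set V}) z j i :
  pos_arc (subnet f I z) j i -> pos_arc f (val j) (val i).
Proof.
case/existsP => y; rewrite /subnet !ffunE !glue_upd => H.
by apply/existsP; exists (glue I z y).
Qed.

Lemma sub_neg (I : {set V}) z j i :
  neg_arc (subnet f I z) j i -> neg_arc f (val j) (val i).
Proof.
case/existsP => y; rewrite /subnet !ffunE !glue_upd => H.
by apply/existsP; exists (glue I z y).
Qed.

Lemma sub_excl (I : {set V}) z j i :
  ~~ (pos_arc (subnet f I z) j i && neg_arc (subnet f I z) j i).
Proof.
apply/negP => /andP[/sub_pos p /sub_neg n].
by move: (excl (val j) (val i)); rewrite p n.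
Qed.


Definition good (I : {set V}) (X Y : {ffun V -> bool}) :=
  [/\ forall v, v \notin I -> X v = Y v, forall i, i \in I -> f X i = X i,
      forall i, i \in I -> f Y i = Y i & X != Y].

Lemma f_eval (T : {set V}) (P : {ffun V -> bool}) i b :
  (exists2 j, j \in T & Defs.arc f j i) ->
  (forall j, sat j i P = if (j \in T) && Defs.arc f j i then b else true) -> f P i = b.
Proof.
move=> [j jT ja] H; rewrite fE; case: b H => H.
  by apply/forallP => k; rewrite H; case: ifP.
by apply/negbTE/forallPn; exists j; rewrite H jT ja.
Qed.

Lemma hard n : forall (I : {set V}) (X Y : {ffun V -> bool}), #|I| <= n -> good I X Y ->
  exists J z, J != set0 /\ positive_circular (subnet f J z).
Proof.
elim: n => [|n IH] I X Y cI [gout gX gY XY].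
  move: cI; rewrite leqn0 => /eqP/cards0_eq I0; exfalso; move/eqP: XY; apply.
  by apply/ffunP => v; apply: gout; rewrite I0 inE.
case: (pickP [pred i | (i \in I) && (X i == Y i)]) => [i /andP[iI /eqP XYi] | noeq].
  apply: (IH (I :\ i) X Y).
    by move: cI; rewrite (cardsD1 i I) iI add1n ltnS.
  split => //.
  - by move=> v; rewrite !inE negb_and negbK => /orP[/eqP->//|]; exact: gout.
  - by move=> v; rewrite !inE => /andP[_ ]; exact: gX.
  - by move=> v; rewrite !inE => /andP[_ ]; exact: gY.
have XYn : forall i, i \in I -> Y i = ~~ X i.
  move=> i iI; move: (noeq i) => /=; rewrite iI /=.
  by case: (X i); case: (Y i).
have s_out : forall i j, i \in I -> j \notin I -> sat j i X.
  move=> i j iI jI; case Xi: (X i).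
    by apply: fT; rewrite gX.
  rewrite (sat_ext _ _ _ _ (gout j jI)); apply: fT; by rewrite gY // XYn // Xi.
have s_in : forall i j, i \in I -> j \in I -> Defs.arc f j i -> sat j i X = X i.
  move=> i j iI jI a; case Xi: (X i).
    by apply: fT; rewrite gX.
  have : sat j i Y by apply: fT; rewrite gY // XYn // Xi.
  rewrite !sat_arc // XYn //.
  by case: (X j); case: (neg_arc f j i).
have s_inY : forall i j, i \in I -> j \in I -> Defs.arc f j i -> sat j i Y = Y i.
  move=> i j iI jI a; move: (s_in i j iI jI a); rewrite !sat_arc // !XYn //.
  by case: (X j); case: (neg_arc f j i); case: (X i).
have H1 : forall u, u \in I -> exists2 p, p \in I & Defs.arc f p u.
  move=> u uI; apply: NNPP => H.
  have : f X u = f Y u.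
    rewrite !fE; apply: eq_forallb => j; case: (boolP (j \in I)) => jI.
      have na : ~~ Defs.arc f j u by apply/negP => a; apply: H; exists j.
      by rewrite !sat_noarc.
    exact: sat_ext _ _ _ _ (gout j jI).
  by rewrite gX // gY // XYn //; case: (X u).
case: (classic (exists T : {set V}, [/\ T \subset I, T != set0, T != I,
   predcl (fun j i => Defs.arc f j i) T & mono I (fun j i => Defs.arc f j i) X T]))
  => [[T [TI T0 TnI Tpc Tm]] | nR].
  pose Z v := if [exists u in T, Defs.arc f v u && X u] then X v else ~~ X v.
  pose X' := [ffun v => if v \in T then X v else if v \in I then Z v else X v].
  pose Y' := [ffun v => if v \in T then Y v else if v \in I then Z v else X v].
  have TsubI : forall v, v \in T -> v \in I by move=> v; apply/subsetP.
  have satZ : forall i j (P : {ffun V -> bool}), i \in T -> j \in I -> j \notin T ->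
      P j = Z j -> sat j i P.
    move=> i j P iT jI jT Pj.
    case: (boolP (Defs.arc f j i)) => a; last exact: sat_noarc.
    rewrite sat_arc // Pj /Z; case: existsP => [[u /andP[uT /andP[ju Xu]]]|nex].
      rewrite -sat_arc // s_in //; last exact: TsubI.
      by rewrite (Tm j i u jI jT iT uT a ju).
    have Xi : X i = false.
      by apply: negbTE; apply/negP => Xi; apply: nex; exists i; rewrite iT a Xi.
    move: (s_in i j (TsubI i iT) jI a); rewrite sat_arc // Xi.
    by case: (X j); case: (neg_arc f j i).
  apply: (IH T X' Y').
    have : #|T| < #|I| by apply: proper_card; rewrite properEneq TnI TI.
    by move=> lt; rewrite -ltnS; exact: leq_trans lt cI.
  have [t tT] := set0Pn _ T0.
  split.
  - by move=> v /negbTE vT; rewrite !ffunE vT.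
  - move=> i iT; rewrite {2}/X' ffunE iT.
    apply: (f_eval (T := T)); first by case: (Tpc i iT) => j jT ja; exists j.
    move=> j; case: (boolP (j \in T)) => jT /=.
      rewrite (sat_ext _ _ _ X); last by rewrite ffunE jT.
      case: (boolP (Defs.arc f j i)) => a; last exact: sat_noarc.
      by rewrite s_in //; apply: TsubI.
    case: (boolP (j \in I)) => jI.
      by apply: satZ => //; rewrite ffunE (negbTE jT) jI.
    rewrite (sat_ext _ _ _ X); last by rewrite ffunE (negbTE jT) (negbTE jI).
    by apply: s_out => //; apply: TsubI.
  - move=> i iT; rewrite {2}/Y' ffunE iT.
    apply: (f_eval (T := T)); first by case: (Tpc i iT) => j jT ja; exists j.
    move=> j; case: (boolP (j \in T)) => jT /=.
      rewrite (sat_ext _ _ _ Y); last by rewrite ffunE jT.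
      case: (boolP (Defs.arc f j i)) => a; last exact: sat_noarc.
      by rewrite s_inY //; apply: TsubI.
    case: (boolP (j \in I)) => jI.
      by apply: satZ => //; rewrite ffunE (negbTE jT) jI.
    rewrite (sat_ext _ _ _ X); last by rewrite ffunE (negbTE jT) (negbTE jI).
    by apply: s_out => //; apply: TsubI.
  - apply/eqP => /ffunP/(_ t); rewrite !ffunE tT XYn ?TsubI //.
    by case: (X t).
have HR : noR I (fun j i => Defs.arc f j i) X.
  by move=> T TI T0 TnI Tpc Tm; apply: nR; exists T; split.
have Huniq := GL H1 HR.
have [pi [piU epi pinj conn]] := GL2 H1 Huniq HR.
pose h := subnet f I X.
pose piW (i : {i : V | i \in I}) : {i : V | i \in I} := insubd i (pi (val i)).
have valpiW : forall i, val (piW i) = pi (val i).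
  by move=> i; rewrite /piW insubdK //; apply: piU; apply: valP.
have piWinj : injective piW.
  move=> a b E; apply: val_inj; apply: pinj; rewrite ?(valP a) ?(valP b) //.
  by rewrite -!valpiW E.
pose s := finv piW.
have arc_h : forall j i, Defs.arc h j i = Defs.arc f (val j) (val i).
  move=> j i; apply/idP/idP.
    by rewrite /Defs.arc => /orP[/sub_pos->|/sub_neg->]; rewrite ?orbT.
  move=> a.
  pose w := if X (val i) then X else Y.
  have wi : f w (val i) by rewrite /w; case Xi: (X (val i)); rewrite ?gX ?gY ?XYn ?Xi ?(valP i).
  have wout : forall v, v \notin I -> w v = X v.
    by move=> v vI; rewrite /w; case: (X (val i)); rewrite // gout.
  pose yw := [ffun k : {i : V | i \in I} => w (val k)].
  have gw : glue I X yw = w.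
    apply/ffunP => v; rewrite /glue !ffunE; case: insubP => [k kI <-|vI] /=.
      by rewrite ffunE.
    by rewrite wout.
  have comp : forall b, h (upd yw j b) i = (b != neg_arc f (val j) (val i)).
    move=> b; rewrite /h /subnet ffunE glue_upd gw fE.
    have Hk : forall k, k != val j -> sat k (val i) (upd w (val j) b).
      move=> k kn; rewrite (sat_ext _ _ _ w); first exact: fT.
      by rewrite ffunE (negbTE kn).
    have Hj : sat (val j) (val i) (upd w (val j) b) = (b != neg_arc f (val j) (val i)).
      by rewrite sat_arc // ffunE eqxx.
    apply/forallP/idP => [H|H k]; first by rewrite -Hj; apply: H.
    by case: (eqVneq k (val j)) => [->|kn]; [rewrite Hj | exact: Hk].
  rewrite /Defs.arc; case nf: (neg_arc f (val j) (val i)).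
    apply/orP; right; apply/existsP; exists yw; by rewrite !comp nf.
  apply/orP; left; apply/existsP; exists yw; by rewrite !comp nf.
have sarc : forall j i, Defs.arc h j i = (i == s j).
  move=> j i; rewrite arc_h epi ?(valP i) ?(valP j) // -valpiW (inj_eq val_inj).
  apply/eqP/eqP => [->|->]; first by rewrite /s (finv_f piWinj).
  by rewrite /s (f_finv piWinj).
have itW : forall m k, val (iter m piW k) = iter m pi (val k).
  by elim=> [|m IHm] k //=; rewrite valpiW IHm.
have [v XYv] : exists v, X v != Y v.
  apply: NNPP => H; move/eqP: XY; apply; apply/ffunP => v.
  by apply/eqP; apply: negbNE; apply/negP => nv; apply: H; exists v.
have vI : v \in I by apply: contraR XYv => vI; rewrite gout.
exists I, X; split; first by apply/set0Pn; exists v.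
split; first exact: sub_excl.
exists s; split; first exact: sarc.
split.
  move=> i j; rewrite /s (same_fconnect_finv piWinj).
  have := conn (val i) (val j) (valP i) (valP j) => /iter_findex E.
  have -> : j = iter (findex pi (val i) (val j)) piW i by apply: val_inj; rewrite itW E.
  exact: fconnect_iter.
have -> : [set j | neg_arc h j (s j)] = [set j | X (val j) != X (val (s j))].
  apply/setP => j; rewrite !inE.
  have a : Defs.arc h j (s j) by rewrite sarc eqxx.
  have af : Defs.arc f (val j) (val (s j)) by rewrite -arc_h.
  have -> : neg_arc h j (s j) = neg_arc f (val j) (val (s j)).
    apply/idP/idP => [/sub_neg //|nf].
    move: a; rewrite /Defs.arc => /orP[/sub_pos pf|//].
    by move: (excl (val j) (val (s j))); rewrite pf nf.
  have := s_in (val (s j)) (val j) (valP _) (valP _) af; rewrite sat_arc //.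
  by case: (X (val j)); case: (neg_arc f (val j) (val (s j))); case: (X (val (s j))).
exact: parity (finv_inj piWinj).
Qed.

End Net.

Theorem corollary10 (V : finType) (f : network V) :
  (0 < #|V|)%N ->
  and_net f ->
  ((forall (I : {set V}) (z : {ffun V -> bool}),
      I != set0 -> at_most_one_fixed_point (subnet f I z))
   <->
   ~ (exists (I : {set V}) (z : {ffun V -> bool}),
        I != set0 /\ positive_circular (subnet f I z))).
Proof.
move=> _ Hf; split.
- move=> A [I [z [I0 pc]]].
  have [v vI] := set0Pn _ I0.
  have [x [y [fx fy xy]]] := pc_two (exist _ v vI) pc.
  exact: xy (A I z I0 x y fx fy).
- move=> nB I z I0 y1 y2 f1 f2; apply: NNPP => ne; apply: nB.
  apply: (hard Hf (n := #|I|) (X := glue I z y1) (Y := glue I z y2)) => //.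
  have fix_gl : forall y, fixed_point (subnet f I z) y ->
      forall i, i \in I -> f (glue I z y) i = glue I z y i.
    move=> y fy i iI; have := glue_val z y (exist _ i iI) => /= ->.
    by rewrite -{2}fy /subnet ffunE.
  split.
  + by move=> v vI; rewrite !glue_out.
  + exact: fix_gl.
  + exact: fix_gl.
  + apply/eqP => E; apply: ne; apply/ffunP => k.
    by rewrite -!(glue_val z) E.
Qed.
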